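(* For all integers $n\ge 36$ and $4\le k\le \frac n6-2$, there exists a feasible simple heterogeneous PV graph $\vec G_R$ with $n$ sites and $k$ carriers such that $$\mathcal M(\vec G_R)\ \ge\ \tfrac1{16}\,(k-3)\,(n^2-2n)^2 .$$ (This holds even though the agent knows $\vec G_R$ and $k$ and has unlimited memory.)
   Context: A PV (periodically varying) system consists of a finite set $S$ of $n$ sites and a set $C$ of $k\le n$ carriers. Each carrier $c$ has a route $\pi(c)=\langle x_0,\dots,x_{p(c)-1}\rangle$, a finite sequence of sites of length $p(c)\ge1$ called its period; $\pi(c)[j]=x_{j\bmod p(c)}$. At each time $t\in\mathbb N$ carrier $c$ is at $\pi(c)[t]$ and moves to $\pi(c)[t+1]$. The PV graph $\vec G_R$ is the directed edge-labelled multigraph on $S$ with edges $(x_i,x_{i+1},i)$, $0\le i<p(c)$, for every carrier. The system is homogeneous if all $p(c)$ are equal, heterogeneous otherwise. A route is simple if $\pi(c)[i]\ne\pi(c)[i+1]$ for all $i$ and, whenever $\pi(c)[i]=\pi(c)[j]$ with $0\le i<j<p(c)$, then $\pi(c)[i+1]\ne\pi(c)[j+1]$ (no self-loops and no repeated directed edge within one period); a PV graph is simple if all its routes are simple. An exploring agent is injected at time $0$ at a site of $\mathrm{start}(\vec G_R)=\{\pi(c)[0]:c\in C\}$; if at time $t$ it is at site $x$ it must either ride one step with some carrier $c$ with $\pi(c)[t]=x$ (one move) or halt; it cannot wait. A strategy solves PVG-Exploration of $\vec G_R$ if from every injection site the agent visits all sites and halts in finite time. $\vec G_R$ is feasible if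 from the starting point of every carrier some realizable walk visits all sites. For feasible $\vec G_R$, $\mathcal M(\vec G_R)$ denotes the minimum, over all deterministic strategies solving PVG-Exploration of $\vec G_R$ (which may use full knowledge of $\vec G_R$ and unlimited memory), of the maximum over injection sites of the number of moves performed. *)

(* Defs.v *)
From mathcomp Require Import all_boot.
Set Implicit Arguments. Unset Strict Implicit. Unset Printing Implicit Defensive.

Section PV.
Variables (S C : finType).

(* A PV system: each carrier c has a nonempty route <x_0,...,x_{p-1}>,
   encoded as the pair (x_0, [x_1;...;x_{p-1}]) so that p(c) >= 1. *)
Definition PVsys := C -> S * seq S.

Variable R : PVsys.

Definition route (c : C) : seq S := (R c).1 :: (R c).2.
Definition period (c : C) : nat := size (route c).
Definition pos (c : C) (t : nat) : S := nth (R c).1 (route c) (t %% period c).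

Definition is_start (x : S) : bool := [exists c, pos c 0 == x].

Definition homogeneous : bool := [forall c, [forall d, period c == period d]].
Definition heterogeneous : bool := ~~ homogeneous.

Definition simple_route (c : C) : Prop :=
  (forall i, i < period c -> pos c i != pos c i.+1) /\
  (forall i j, i < j -> j < period c -> pos c i = pos c j ->
     pos c i.+1 <> pos c j.+1).
Definition simple_PV : Prop := forall c, simple_route c.

(* A walk from site x at time t: a sequence of carriers ridden, one per
   time step (the agent cannot wait). *)
Fixpoint valid_walk (x : S) (t : nat) (w : seq C) : bool :=
  if w is c :: w' then (pos c t == x) && valid_walk (pos c t.+1) t.+1 w'
  else true.
Fixpoint walk_sites (x : S) (t : nat) (w : seq C) : seq S :=
  x :: (if w is c :: w' then walk_sites (pos c t.+1) t.+1 w' else [::]).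

Definition explores (x : S) (w : seq C) : bool :=
  valid_walk x 0 w && [forall y, y \in walk_sites x 0 w].

Definition feasible : Prop := forall c, exists w, explores (pos c 0) w.

(* A deterministic strategy with full knowledge and unlimited memory: since
   the system is deterministic, it amounts to the finite walk (sequence of
   carriers ridden, after which the agent halts) it performs from each
   injection site. *)
Definition strategy := S -> seq C.
Definition solves (st : strategy) : Prop :=
  forall x, is_start x -> explores x (st x).
Definition max_moves (st : strategy) : nat :=
  \max_(x | is_start x) size (st x).

End PV.

(* Main.v *)
Require Import Defs.
From mathcomp Require Import all_boot.
Set Implicit Arguments. Unset Strict Implicit. Unset Printing Implicit Defensive.

Lemma modnMDr m p d : (m + p * d) %% d = m %% d.
Proof. by rewrite addnC modnMDl. Qed.

From Stdlib Require Import Lia.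

Lemma modn_shift t a p : 0 < p -> (t + (a + (p - t %% p))) %% p = a %% p.
Proof.
move=> Hp.
have Hr : t %% p < p by rewrite ltn_mod.
rewrite {1}(divn_eq t p).
move: (t %/ p) (t %% p) Hr => q r Hr.
have -> : q * p + r + (a + (p - r)) = a + q.+1 * p.
  move/leP: Hr => Hr; rewrite -!plusE -!multE -!minusE; nia.
by rewrite modnMDr.
Qed.

Section Gen.
Variables (S C : finType) (R : PVsys S C).

Fixpoint wend (x : S) (t : nat) (w : seq C) : S :=
  if w is c :: w' then wend (pos R c t.+1) t.+1 w' else x.

Lemma valid_cat x t w1 w2 :
  valid_walk R x t (w1 ++ w2) =
  valid_walk R x t w1 && valid_walk R (wend x t w1) (t + size w1) w2.
Proof.
elim: w1 x t => [|c w1 IH] x t /=; first by rewrite addn0.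
by rewrite IH addnS -addSn andbA.
Qed.

Lemma sites_catl x t w1 w2 y :
  y \in walk_sites R x t w1 -> y \in walk_sites R x t (w1 ++ w2).
Proof.
elim: w1 x t => [|c w1 IH] x t /=.
  by rewrite inE => /eqP ->; case: w2 => [|? ?]; rewrite /= inE eqxx.
by rewrite !inE => /orP [->//|/IH ->]; rewrite orbT.
Qed.

Lemma sites_catr x t w1 w2 y :
  y \in walk_sites R (wend x t w1) (t + size w1) w2 -> y \in walk_sites R x t (w1 ++ w2).
Proof.
elim: w1 x t => [|c w1 IH] x t /=; first by rewrite addn0.
by rewrite addnS -addSn => /IH; rewrite inE => ->; rewrite orbT.
Qed.

Lemma valid_nseq c t d : valid_walk R (pos R c t) t (nseq d c).
Proof. by elim: d t => [|d IH] t //=; rewrite eqxx IH. Qed.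

Lemma wend_nseq c t d : wend (pos R c t) t (nseq d c) = pos R c (t + d).
Proof. by elim: d t => [|d IH] t /=; rewrite ?addn0 // IH addnS -addSn. Qed.

Lemma sites_nseq c t d i : i <= d -> pos R c (t + i) \in walk_sites R (pos R c t) t (nseq d c).
Proof.
elim: d t i => [|d IH] t i /=.
  by rewrite leqn0 => /eqP ->; rewrite addn0 inE.
case: i => [|i] Hi; first by rewrite addn0 inE eqxx.
by rewrite inE -addSnnS IH ?orbT.
Qed.

Lemma size_walk_sites x t w : size (walk_sites R x t w) = (size w).+1.
Proof. by elim: w x t => [|c w IH] x t //=; rewrite IH. Qed.

Lemma pos_mod c t : pos R c (t %% period R c) = pos R c t.
Proof. by rewrite /pos modn_mod. Qed.

Lemma pos_per_add c t m : pos R c (t + m * period R c) = pos R c t.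
Proof. by rewrite /pos modnMDr. Qed.

Lemma sites_period c t d tau : period R c <= d ->
  pos R c tau \in walk_sites R (pos R c t) t (nseq d c).
Proof.
move=> Hd.
have Hp : 0 < period R c by rewrite /period.
have -> : pos R c tau = pos R c (t + (tau %% period R c + (period R c - t %% period R c)) %% period R c).
  rewrite -(pos_mod c (t + _)) -(pos_mod c tau).
  congr (pos R c).
  by rewrite modnDmr modn_shift // modn_mod.
apply: (sites_nseq c t); apply: leq_trans Hd; rewrite ltnW // ltn_mod //.
Qed.

Lemma walk_invariant (P : S -> nat -> Prop) :
  (forall x t c, P x t -> pos R c t = x -> P (pos R c t.+1) t.+1) ->
  forall w x t, valid_walk R x t w -> P x t ->
  forall y, y \in walk_sites R x t w -> exists t', [/\ t <= t', t' <= t + size w & P y t'].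
Proof.
move=> Hstep; elim=> [|c w IH] x t /=.
  move=> _ Hx y; rewrite inE => /eqP ->; exists t; split; rewrite ?addn0 //.
move=> /andP [/eqP Hc Hv] Hx y; rewrite inE => /orP [/eqP ->|Hy].
  by exists t; split; rewrite ?leq_addr.
have [t' [H1 H2 H3]] := IH _ _ Hv (Hstep _ _ _ Hx Hc) y Hy.
exists t'; split => //; first exact: ltnW.
by rewrite addnS -addSn.
Qed.

Variable L : nat.
Definition meets (a b : C) := exists2 r, r < L & forall t, t %% L = r -> pos R a t = pos R b t.

Fixpoint chain_ok (c : C) (cs : seq C) : Prop :=
  if cs is c' :: cs' then meets c c' /\ chain_ok c' cs' else True.

Lemma chain_walk (HL : forall c, period R c <= L) cs : forall c t, chain_ok c cs ->
  exists w, valid_walk R (pos R c t) t w /\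
    forall c' tau, c' \in c :: cs -> pos R c' tau \in walk_sites R (pos R c t) t w.
Proof.
elim: cs => [|c1 cs IH] c t /=.
  move=> _; exists (nseq L c); split; first exact: valid_nseq.
  by move=> c' tau; rewrite inE => /eqP ->; apply: sites_period.
move=> [[r Hr Hm] Hch].
have HL0 : 0 < L by apply: leq_trans (HL c); rewrite /period.
set d := L + (r + (L - t %% L)) %% L.
have Hd : (t + d) %% L = r.
  by rewrite /d addnCA modnDl modnDmr modn_shift // modn_small.
have [w' [Hv' Hc']] := IH c1 (t + d) Hch.
exists (nseq d c ++ w'); split.
  rewrite valid_cat valid_nseq wend_nseq size_nseq /= (Hm _ Hd).
  exact: Hv'.
move=> c' tau; rewrite inE => /orP [/eqP ->|Hin].
  by apply: sites_catl; apply: sites_period; rewrite (leq_trans (HL c)) // leq_addr.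
apply: sites_catr; rewrite wend_nseq size_nseq (Hm _ Hd).
exact: Hc'.
Qed.

End Gen.

From Stdlib Require Import Lia.

Ltac sprep := repeat match goal with
 | |- is_true (leq _ _) -> _ => intro
 | |- is_true (@eq_op _ _ _) -> _ => intro
 | |- _ = _ -> _ => intro
 | H : is_true (leq _ _) |- _ => apply (elimT leP) in H
 | H : is_true (@eq_op _ _ _) |- _ => apply (elimT eqP) in H
 | |- is_true (leq _ _) => apply/leP
 | |- is_true (@eq_op _ _ _) => apply/eqP
 | |- ~ _ => intro
 end; unfold addn, muln, subn in *.
Ltac slia := sprep; lia.
Ltac snia := sprep; nia.


Definition bgen (m oE oO i t : nat) : nat :=
  if odd t then oO + (t./2 + t./2 %/ m + i) %% m else oE + (t./2 + i) %% m.

Lemma half_addD t x : (t + x.*2)./2 = t./2 + x.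
Proof. by rewrite halfD odd_double andbF add0n doubleK. Qed.

Lemma bgen_per m oE oO i t : 0 < m -> bgen m oE oO i (t + (m * m).*2) = bgen m oE oO i t.
Proof.
move=> Hm; rewrite /bgen oddD odd_double addbF half_addD.
case: (odd t); congr (_ + _).
  rewrite [t./2 + _]addnC divnMDl // -addnA (addnC (m * m)) -!addnA.
  rewrite [X in X %% m](_ : _ = t./2 + (t./2 %/ m + i) + (m + 1) * m); last first.
    rewrite mulnDl mul1n; slia.
  by rewrite modnMDr addnA.
by rewrite -addnA (addnC (m*m)) addnA modnMDr.
Qed.

Lemma modn_cancel x a b m : (x + a) %% m = (x + b) %% m -> a %% m = b %% m.
Proof. by move/eqP; rewrite eqn_modDl => /eqP. Qed.

Lemma bgen_class m oE oO i t :
  bgen m oE oO i t = (if odd t then oO else oE) + (if odd t then (t./2 + t./2 %/ m + i) %% m else (t./2 + i) %% m).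
Proof. by rewrite /bgen; case: (odd t). Qed.

Lemma bgen_trans m oE oO i i' t : 0 < m -> i < m -> i' < m ->
  bgen m oE oO i t = bgen m oE oO i' t -> i = i'.
Proof.
move=> Hm Hi Hi'; rewrite /bgen; case: (odd t) => /addnI/modn_cancel; by rewrite !modn_small.
Qed.

Lemma key_inj m a b : 0 < m -> a < m * m -> b < m * m ->
  a %% m = b %% m -> (a + a %/ m) %% m = (b + b %/ m) %% m -> a = b.
Proof.
move=> Hm Ha Hb H1 H2.
have : (b %% m + a %/ m) %% m = (b %% m + b %/ m) %% m by rewrite -{1}H1 !modnDml.
move/modn_cancel; rewrite !modn_small ?ltn_divLR // => H3.
by rewrite (divn_eq a m) (divn_eq b m) H1 H3.
Qed.

Lemma half_S_even t : ~~ odd t -> t.+1./2 = t./2.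
Proof. by move=> Ht; rewrite -uphalfE uphalf_half (negbTE Ht). Qed.
Lemma half_S_odd t : odd t -> t.+1./2 = (t./2).+1.
Proof. by move=> Ht; rewrite -uphalfE uphalf_half Ht. Qed.

Lemma modn_cancelr x a b m : (a + x) %% m = (b + x) %% m -> a %% m = b %% m.
Proof. by move/eqP; rewrite eqn_modDr => /eqP. Qed.

Lemma bgen_edge m oE oO i a b : 0 < m ->
  (forall x y, x < m -> y < m -> oE + x != oO + y) ->
  a < (m * m).*2 -> b < (m * m).*2 ->
  bgen m oE oO i a = bgen m oE oO i b -> bgen m oE oO i a.+1 = bgen m oE oO i b.+1 -> a = b.
Proof.
move=> Hm Hsep Ha Hb.
have Hpar : forall u v, bgen m oE oO i u = bgen m oE oO i v -> odd u = odd v.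
  move=> u v; rewrite /bgen; case Hu: (odd u); case Hv: (odd v) => // E.
    by move: (Hsep _ _ (ltn_pmod (v./2 + i) Hm) (ltn_pmod (u./2 + u./2 %/ m + i) Hm)); rewrite E eqxx.
  by move: (Hsep _ _ (ltn_pmod (u./2 + i) Hm) (ltn_pmod (v./2 + v./2 %/ m + i) Hm)); rewrite E eqxx.
move=> E1 E2; have Po := Hpar _ _ E1.
have Ha2 : a./2 < m * m by rewrite -ltn_double (leq_ltn_trans _ Ha) // -{2}(odd_double_half a) leq_addl.
have Hb2 : b./2 < m * m by rewrite -ltn_double (leq_ltn_trans _ Hb) // -{2}(odd_double_half b) leq_addl.
suff : a./2 = b./2 by move=> E; rewrite -(odd_double_half a) -(odd_double_half b) E Po.
move: E1 E2; rewrite /bgen /= -Po; case Hoa: (odd a) => /= /addnI E1 /addnI E2.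
  have Hob : odd b by rewrite -Po.
  rewrite !uphalf_half Hoa Hob -!addnA in E2.
  apply: (key_inj Hm Ha2 Hb2); last exact: (modn_cancelr E1).
  exact: (modn_cancelr (modn_cancel E2)).
have Hob : ~~ odd b by rewrite -Po Hoa.
rewrite !uphalf_half Hoa (negbTE Hob) !add0n in E2.
apply: (key_inj Hm Ha2 Hb2); last exact: (modn_cancelr E2).
exact: (modn_cancelr E1).
Qed.

Section Construction.
Variables (h k : nat) (e : bool).
Hypothesis Hh : 3 <= h.
Hypothesis Hk : 2 <= k.
Hypothesis Hkh : k <= (h.-1).*2.

Definition hp := h.-1.
Definition pA := (h * h).*2.
Definition pB := (hp * hp).*2.
Definition L := lcmn pA pB.
Definition ng := k.+1./2.

Hypothesis HL : k.+1 * pB < L.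

Definition baseA i := bgen h 0 h i.
Definition baseB i := bgen hp h 0 i.

Fixpoint f (j : nat) : nat :=
  if j is j'.+1 then (if j' is 0 then 0 else f j' + (if odd j' then pB else 1)) else 0.
Definition g j := L.-1 - f j.

Definition per j := if odd j then pB else pA.
Definition base j := if odd j then baseB j./2 else baseA j./2.
Definition i1 j := if odd j then g j %% pB else g j.+1 %% pA.
Definition i2 j := if odd j then pB else if j == 0 then (if e then 0 else pA) else g j %% pA.
Definition s1 j := 2 * h + j./2.
Definition s2 j := if j == 0 then 2 * h + ng else 2 * h + j./2.-1.
Definition F j t := if t %% per j == i1 j then s1 j
  else if t %% per j == i2 j then s2 j else base j t.

Lemma hp_pos : 0 < hp. Proof. rewrite /hp; slia. Qed.
Lemma hp_lt : hp < h. Proof. rewrite /hp; slia. Qed.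
Lemma pB_pos : 0 < pB. Proof. rewrite /pB -mul2n; have := hp_pos; snia. Qed.
Lemma pB_lt : pB < pA. Proof. rewrite /pB /pA -!mul2n; have := hp_lt; snia. Qed.
Lemma pA_pos : 0 < pA. Proof. exact: ltn_trans pB_pos pB_lt. Qed.
Lemma L_pos : 0 < L. Proof. by rewrite /L lcmn_gt0 pA_pos pB_pos. Qed.
Lemma pA_L : pA %| L. Proof. exact: dvdn_lcml. Qed.
Lemma pB_L : pB %| L. Proof. exact: dvdn_lcmr. Qed.
Lemma per_pos j : 0 < per j. Proof. by rewrite /per; case: ifP => _; rewrite ?pB_pos ?pA_pos. Qed.
Lemma per_L j : per j %| L. Proof. by rewrite /per; case: ifP => _; rewrite ?pB_L ?pA_L. Qed.
Lemma per2 j : 2 <= per j.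
Proof. rewrite /per /pA /pB -!mul2n; have := hp_pos; case: ifP => _; snia. Qed.

Lemma f_step j : 0 < j -> f j.+1 = f j + (if odd j then pB else 1).
Proof. by case: j. Qed.

Lemma f_le j : f j <= j * pB.
Proof.
elim: j => [//|j IH].
case: j IH => [//|j] IH.
rewrite f_step // mulSn addnC leq_add //; case: ifP => _ //; exact: pB_pos.
Qed.

Lemma f_lt j : j <= k.+1 -> f j < L.
Proof. move=> Hj; apply: leq_ltn_trans (f_le j) _; apply: leq_ltn_trans HL; exact: leq_mul. Qed.

Lemma g_step j : 0 < j -> j <= k -> g j = g j.+1 + (if odd j then pB else 1).
Proof.
move=> Hj Hjk; rewrite /g f_step //.
have := f_lt (j := j.+1); rewrite f_step // ltnS => /(_ Hjk) H.
have := L_pos; move: H; case: ifP => _; slia.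
Qed.

Lemma g_lt j : g j < L.
Proof. rewrite /g; have := L_pos; slia. Qed.

Lemma g1 : g 1 = L.-1.
Proof. by rewrite /g /= subn0. Qed.


Lemma half_spec j : j = odd j + 2 * j./2.
Proof. by rewrite mul2n odd_double_half. Qed.

Lemma half_lt_k j : j < k -> j./2 < hp.
Proof. move=> Hj; rewrite ltn_half_double; apply: leq_trans Hj Hkh. Qed.

Lemma half_lt_ng j : j < k -> j./2 < ng.
Proof. move=> Hj; rewrite /ng; exact: (half_leq (Hj : j.+2 <= k.+1)). Qed.

Lemma ng_pos : 0 < ng.
Proof. rewrite /ng half_gt0; slia. Qed.

Lemma baseA_per i t : baseA i (t + pA) = baseA i t.
Proof. apply: bgen_per; slia. Qed.
Lemma baseB_per i t : baseB i (t + pB) = baseB i t.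
Proof. apply: bgen_per; exact: hp_pos. Qed.

Lemma base_per j t : base j (t + per j) = base j t.
Proof. by rewrite /base /per; case: ifP => _; rewrite ?baseA_per ?baseB_per. Qed.

Lemma F_per j t : F j (t + per j) = F j t.
Proof. by rewrite /F modnDr base_per. Qed.

Lemma F_mul j t q : F j (t + q * per j) = F j t.
Proof. elim: q => [|q IH]; first by rewrite addn0. by rewrite mulSn (addnC (per j)) addnA F_per. Qed.

Lemma F_mod j t : F j (t %% per j) = F j t.
Proof. by rewrite {2}(divn_eq t (per j)) addnC F_mul. Qed.

Lemma F_modL j t : F j (t %% L) = F j t.
Proof.
have [q Hq] := dvdnP (per_L j).
by rewrite -F_mod -(F_mod j t) Hq modn_dvdm ?dvdn_mull.
Qed.

Lemma base_lt j t : j < k -> base j t < 2 * h.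
Proof.
move=> Hj; have Hh2 := half_lt_k Hj; have := hp_lt; have := hp_pos.
rewrite /base /baseA /baseB /bgen; case: (odd j); case: (odd t).
- move=> ? ?; set x := _ %% hp; have : x < hp by rewrite ltn_mod.
  slia.
- move=> ? ?; set x := _ %% hp; have : x < hp by rewrite ltn_mod.
  slia.
- move=> ? ?; set x := _ %% h; have : x < h by rewrite ltn_mod; slia.
  slia.
- move=> ? ?; set x := _ %% h; have : x < h by rewrite ltn_mod; slia.
  slia.
Qed.

Lemma base_class j t : (base j t < h) = (odd t == odd j).
Proof.
have := hp_lt; have := hp_pos => H0 H1.
rewrite /base /baseA /baseB /bgen; case: (odd j); case: (odd t) => /=.
- by rewrite eqxx add0n (ltn_trans (ltn_pmod _ H0) H1).
- by rewrite /= ltnNge leq_addr.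
- by rewrite /= ltnNge leq_addr.
- by rewrite eqxx add0n ltn_mod (ltn_trans H0 H1).
Qed.


Lemma Fspec j t : j < k -> 2 * h <= F j t ->
  (t %% per j = i1 j /\ F j t = s1 j) \/ (t %% per j = i2 j /\ F j t = s2 j /\ ~~ odd j).
Proof.
move=> Hj; rewrite /F; case: eqP => [E _|_]; first by left.
case: eqP => [E _|_]; last by rewrite leqNgt base_lt.
right; split => //; split => //; apply/negP => Ho.
by move: E; rewrite /per /i2 Ho => E; have := ltn_pmod t pB_pos; rewrite E ltnn.
Qed.

Lemma Fcore j t : j < k -> F j t < 2 * h -> F j t = base j t.
Proof.
move=> Hj; rewrite /F; case: eqP => _; first by rewrite /s1 ltnNge leq_addr.
case: eqP => _ //; rewrite /s2; case: (j == 0); by rewrite ltnNge leq_addr.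
Qed.

Lemma base_noncollide a b t : a < k -> b < k -> base a t = base b t -> a = b.
Proof.
move=> Ha Hb E.
have Po : odd a = odd b.
  have := congr1 (fun x => x < h) E; rewrite /= !base_class.
  by case: (odd t); case: (odd a); case: (odd b).
suff : a./2 = b./2 by move=> E2; rewrite (half_spec a) (half_spec b) E2 Po.
have Ha2 := half_lt_k Ha; have Hb2 := half_lt_k Hb; have := hp_lt => H1.
move: E; rewrite /base -Po; case: (odd a) => E.
  exact: (bgen_trans hp_pos Ha2 Hb2 E).
apply: (bgen_trans _ _ _ E); slia.
Qed.

Lemma s1_neq_s2 j : ~~ odd j -> s1 j <> s2 j.
Proof.
move=> Hev; have := ng_pos => Hng; rewrite /s1 /s2.
case: (j =P 0) => [->|Hj0] /= E.
  by move: E Hng; rewrite addn0 => /eqP; rewrite -{1}(addn0 (2*h)) eqn_add2l => /eqP <-.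
have Hj2 : j = 2 * j./2 by rewrite {1}(half_spec j) (negbTE Hev).
move: E Hj0 Hj2; move: (j./2) => x; slia.
Qed.

Lemma Fspec_inj j a b : j < k -> F j a = F j b -> 2 * h <= F j a -> a %% per j = b %% per j.
Proof.
move=> Hj E Ha; have Hb : 2 * h <= F j b by rewrite -E.
case: (Fspec Hj Ha) => [[A1 A2]|[A1 [A2 A3]]]; case: (Fspec Hj Hb) => [[B1 B2]|[B1 [B2 B3]]].
- by rewrite A1 B1.
- by exfalso; apply: (s1_neq_s2 B3); rewrite -A2 -B2.
- by exfalso; apply: (s1_neq_s2 A3); rewrite -A2 -B2.
- by rewrite A1 B1.
Qed.

Lemma Fvisit j t m : j < k -> m < ng -> F j t = 2 * h + m ->
  [\/ j = 2 * m /\ t %% pA = g (2 * m).+1 %% pA,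
      j = (2 * m).+1 /\ t %% pB = g (2 * m).+1 %% pB
    | j = (2 * m).+2 /\ t %% pA = g (2 * m).+2 %% pA].
Proof.
move=> Hj Hm E.
have Hge : 2 * h <= F j t by rewrite E leq_addr.
have Hj2 := half_spec j.
case: (Fspec Hj Hge) => [[A1 A2]|[A1 [A2 A3]]].
  move: A2; rewrite E /s1 => /addnI Em.
  move: A1 Hj2; rewrite /per /i1; case: (odd j) => /= A1 Hj2.
    have Hjm : j = (2 * m).+1 by rewrite {1}Hj2 Em.
    by apply: Or32; split => //; rewrite -Hjm.
  have Hjm : j = 2 * m by rewrite {1}Hj2 Em.
  by apply: Or31; split => //; rewrite -Hjm.
move: A2 A1; rewrite E /s2 /per /i2 (negbTE A3).
case: (j =P 0) => [->|Hj0].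
  by move/addnI => Em; move: Em Hm => ->; rewrite ltnn.
move/addnI => Em A1.
have Hj' : j = (2 * m).+2 by move: Hj2 Em Hj0; rewrite (negbTE A3) add0n; move: (j./2) => x; slia.
by apply: Or33; rewrite -Hj'.
Qed.

Lemma FvisitD j t : j < k -> F j t = 2 * h + ng -> j = 0.
Proof.
move=> Hj E; have Hge : 2 * h <= F j t by rewrite E leq_addr.
have Hn := half_lt_ng Hj.
case: (Fspec Hj Hge) => [[A1 A2]|[A1 [A2 A3]]].
  by move: A2; rewrite E /s1 => /addnI Em; move: Hn; rewrite Em ltnn.
move: A2; rewrite E /s2; case: (j =P 0) => // _ /addnI Em.
by move: Hn Em; move: (j./2) => x; slia.
Qed.

Lemma F_range j t : j < k -> F j t < 2 * h + ng + e.
Proof.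
move=> Hj; have Hn := half_lt_ng Hj; have Hb := base_lt t Hj.
rewrite /F; case: eqP => _; first by rewrite /s1 -addnA ltn_add2l ltn_addr.
case: eqP => [E|_]; last by rewrite -addnA ltn_addr.
rewrite /s2; case: (j =P 0) => [Hj0|Hj0].
  move: E; rewrite /i2 Hj0 /=; case: e => //=.
    by rewrite addn1.
  by move=> E; have := ltn_pmod t pA_pos; rewrite /per /= E ltnn.
rewrite -addnA ltn_add2l; move: Hn; move: (j./2) => x; slia.
Qed.

Lemma crt t x : t %% pA = x %% pA -> t %% pB = x %% pB -> t %% L = x %% L.
Proof.
move=> HA HB.
have HA' : (t %% L) %% pA = (x %% L) %% pA by rewrite !(modn_dvdm _ pA_L).
have HB' : (t %% L) %% pB = (x %% L) %% pB by rewrite !(modn_dvdm _ pB_L).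
have Ht := ltn_pmod t L_pos; have Hx := ltn_pmod x L_pos.
move: (t %% L) (x %% L) HA' HB' Ht Hx => u v.
wlog Huv : u v / v <= u.
  move=> W H1 H2 H3 H4; case: (leqP v u) => H; first exact: W.
  by symmetry; apply: W => //; apply: ltnW.
move=> H1 H2 Hu Hv.
have D : L %| u - v.
  by rewrite dvdn_lcm -!eqn_mod_dvd // H1 H2 !eqxx.
apply/eqP; rewrite eqn_leq Huv andbT; move: D.
case: (ltnP v u) => // Hlt /dvdn_leq; rewrite subn_gt0 => /(_ Hlt) H.
by exfalso; move: H Hu; slia.
Qed.


Lemma halfS j : j.+1./2 = odd j + j./2.
Proof. by rewrite -uphalfE uphalf_half. Qed.

Lemma modS_neq x p : 1 < p -> (x + 1) %% p <> x %% p.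
Proof.
move=> Hp E; have := @modn_cancel x 1 0 p; rewrite addn0 => /(_ E).
by rewrite mod0n modn_small.
Qed.

Lemma meet_nat a b t : a < b -> b < k -> F a t = F b t -> b = a.+1 /\ t %% L = g b.
Proof.
move=> Hab Hb E; have Ha := ltn_trans Hab Hb.
case: (ltnP (F a t) (2 * h)) => Hlt.
  have Hlt' : F b t < 2 * h by rewrite -E.
  have E1 := Fcore Ha Hlt; have E2 := Fcore Hb Hlt'.
  have : base a t = base b t by rewrite -E1 -E2.
  by move/(base_noncollide Ha Hb) => Heq; move: Hab; rewrite Heq ltnn.
have Hr := F_range t Ha.
have Em : F a t = 2 * h + (F a t - 2 * h) by rewrite subnKC.
move: Em Hr; move: (F a t - 2 * h) => m Em Hr.
have : m <= ng by move: Hr; rewrite Em; case: e => /=; slia.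
rewrite leq_eqVlt => /orP [/eqP Hm|Hm].
  move: Em; rewrite Hm => Em.
  have Ha0 := FvisitD Ha Em; have Hb0 := FvisitD Hb (etrans (esym E) Em).
  by move: Hab; rewrite Ha0 Hb0.
have Eb : F b t = 2 * h + m by rewrite -E.
have Hgs : forall j, 0 < j -> j <= k -> g j = g j.+1 + (if odd j then pB else 1) by move=> j; apply: g_step.
case: (Fvisit Ha Hm Em) => [[Ha' HA]|[Ha' HB]|[Ha' HA]];
case: (Fvisit Hb Hm Eb) => [[Hb' HA2]|[Hb' HB2]|[Hb' HA2]]; subst a b;
  try (exfalso; move: Hab; clear; slia).
- split => //; rewrite (crt HA HB2) modn_small //; exact: g_lt.
- exfalso; have Hg : g (2 * m).+1 = g (2 * m).+2 + pB.
    by rewrite (Hgs (2 * m).+1) //= mul2n odd_double.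
  have H := @modn_cancel (g (2 * m).+2) pB 0 pA; rewrite addn0 in H.
  move: HA HA2 => ->; rewrite Hg => /H; rewrite mod0n modn_small ?pB_lt //.
  by move=> H0; have := pB_pos; rewrite H0.
- have Hg : g (2 * m).+1 = g (2 * m).+2 + pB.
    have Hod : odd (2 * m) = false by rewrite oddM. 
    have Ho1 : odd (2 * m).+1 = true by rewrite /= Hod.
    by rewrite (Hgs (2 * m).+1) ?Ho1 //; apply: ltnW; apply: ltnW.
  have HB3 : t %% pB = g (2 * m).+2 %% pB by rewrite HB Hg modnDr.
  by split => //; rewrite (crt HA2 HB3) modn_small ?g_lt.
Qed.


Lemma F_i1 j t : t %% per j = i1 j -> F j t = s1 j.
Proof. by rewrite /F => ->; rewrite eqxx. Qed.
Lemma F_i2 j t : t %% per j <> i1 j -> t %% per j = i2 j -> F j t = s2 j.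
Proof. by rewrite /F => /eqP/negbTE -> ->; rewrite eqxx. Qed.
Lemma F_base j t : t %% per j <> i1 j -> t %% per j <> i2 j -> F j t = base j t.
Proof. by rewrite /F => /eqP/negbTE -> /eqP/negbTE ->. Qed.

Lemma pA_gt1 : 1 < pA. Proof. have := per2 0; by rewrite /per. Qed.
Lemma pB_gt1 : 1 < pB. Proof. have := per2 1; by rewrite /per. Qed.

Lemma meet_pos j t : j.+1 < k -> t %% L = g j.+1 -> F j t = F j.+1 t.
Proof.
move=> Hj Ht.
have HA : t %% pA = g j.+1 %% pA by rewrite -(modn_dvdm t pA_L) Ht.
have HB : t %% pB = g j.+1 %% pB by rewrite -(modn_dvdm t pB_L) Ht.
have Hjk : j <= k by apply: ltnW; apply: ltnW.
case Hoj: (odd j).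
- have Hj0 : 0 < j by case: j Hoj {Hj Ht HA HB Hjk}.
  have Hg : g j = g j.+1 + pB by rewrite g_step ?Hoj.
  have Hg2 : g j.+1 = g j.+2 + 1 by rewrite g_step //= ?Hoj //; apply: ltnW.
  rewrite F_i1; last by rewrite /per /i1 Hoj HB Hg modnDr.
  rewrite F_i2.
  + by rewrite /s1 /s2 /= uphalf_half Hoj.
  + rewrite /per /i1 /= ?Hoj /= HA Hg2; exact: modS_neq pA_gt1.
  + by rewrite /per /i2 /= ?Hoj /= HA.
- rewrite F_i1; last by rewrite /per /i1 Hoj HA.
  rewrite F_i1; last by rewrite /per /i1 /= ?Hoj /= HB.
  by rewrite /s1 /= uphalf_half Hoj.
Qed.


Definition T j := if j is j'.+1 then j' * L + g j else 0.

Lemma T_step j t : 0 < j -> j < k -> T j.-1 <= t -> t %% L = g j -> T j <= t.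
Proof.
case: j => [//|[|j]] _ Hj /=.
  by rewrite mul0n add0n g1 => _ <-; apply: leq_mod.
move=> H1 Ht.
have Hg : g j.+2 < g j.+1.
  rewrite (g_step (j := j.+1)) //; last by slia.
  by case: ifP => _; rewrite ?addn1 // -{1}(addn0 (g _)) ltn_add2l pB_pos.
have Ht' := divn_eq t L; rewrite Ht in Ht'.
move: (t %/ L) Ht' => q Ht'.
have Hq : j * L < q * L by move: H1 Hg Ht'; move: (j * L) (q * L) => x y; slia.
rewrite ltn_pmul2r ?L_pos // in Hq.
by rewrite Ht' leq_add2r leq_mul2r Hq orbT.
Qed.

Lemma T_mono j : T j <= T j.+1.
Proof.
case: j => [//|j] /=; have := g_lt j.+1; rewrite mulSn.
move: (j * L) (g j.+1) (g j.+2) => x y z; slia.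
Qed.

Lemma T_lower j : j.-1 * L <= T j.
Proof. case: j => [//|j] /=; exact: leq_addr. Qed.

Lemma modS_ne t p : 1 < p -> t %% p <> t.+1 %% p.
Proof. by move=> Hp E; apply: (modS_neq (x := t) Hp); rewrite addn1. Qed.

Lemma F_noloop j t : j < k -> F j t <> F j t.+1.
Proof.
move=> Hj E.
case: (leqP (2 * h) (F j t)) => H.
  exact: (@modS_ne t (per j) (per2 j)) (Fspec_inj Hj E H).
have H' : F j t.+1 < 2 * h by rewrite -E.
move: E; rewrite (Fcore Hj H) (Fcore Hj H') => E.
have := congr1 (fun x => x < h) E; rewrite /= !base_class /=.
by case: (odd t); case: (odd j).
Qed.

Lemma modS_ne2 a b p : a < b -> b < p -> a.+1 %% p <> b.+1 %% p.
Proof.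
move=> Hab Hbp; rewrite (modn_small (m := a.+1)); last by apply: (leq_ltn_trans Hab).
case: (ltnP b.+1 p) => H.
  by rewrite modn_small // => E; move: Hab; rewrite E ltnn.
have -> : b.+1 = p by apply/eqP; rewrite eqn_leq H Hbp.
by rewrite modnn.
Qed.

Lemma F_edge j a b : j < k -> a < b -> b < per j -> F j a = F j b -> F j a.+1 = F j b.+1 -> False.
Proof.
move=> Hj Hab Hb E1 E2.
have Ha : a < per j := ltn_trans Hab Hb.
case: (leqP (2 * h) (F j a)) => H1.
  by move: (Fspec_inj Hj E1 H1); rewrite !modn_small // => E; move: Hab; rewrite E ltnn.
case: (leqP (2 * h) (F j a.+1)) => H2.
  exact: (modS_ne2 Hab Hb) (Fspec_inj Hj E2 H2).
have H1' : F j b < 2 * h by rewrite -E1.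
have H2' : F j b.+1 < 2 * h by rewrite -E2.
move: E1 E2; rewrite (Fcore Hj H1) (Fcore Hj H1') (Fcore Hj H2) (Fcore Hj H2') => E1 E2.
have := hp_lt => Hlt.
suff: a = b by move=> E; move: Hab; rewrite E ltnn.
move: Ha Hb E1 E2; rewrite /per /base /baseA /baseB; case: (odd j) => Ha Hb E1 E2.
  apply: (@bgen_edge hp h 0 j./2 a b hp_pos _ Ha Hb E1 E2).
  move=> x y Hx Hy; rewrite add0n; apply/eqP; slia.
apply: (@bgen_edge h 0 h j./2 a b _ _ Ha Hb E1 E2); first slia.
move=> x y Hx Hy; rewrite add0n; apply/eqP; slia.
Qed.


Lemma Lm1_pA : L.-1 %% pA = pA.-1.
Proof.
have [q Hq] := dvdnP pA_L.
have Hq0 : 0 < q by move: L_pos; rewrite Hq muln_gt0 => /andP [].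
have := pA_pos => HpA.
have E : forall x y, 0 < x -> 0 < y -> (x * y).-1 = x.-1 * y + y.-1.
  by move=> x y; clear; snia.
rewrite Hq E //.
by rewrite modnMDl modn_small // prednK.
Qed.

Lemma i1_0 : i1 0 = pA.-1.
Proof. by rewrite /i1 /= g1 Lm1_pA. Qed.

Lemma half2 m : (2 * m)./2 = m.
Proof. by rewrite mul2n doubleK. Qed.

Lemma odd2 m : odd (2 * m) = false.
Proof. by rewrite mul2n odd_double. Qed.

Lemma pA_big : 4 * h <= pA.-1.
Proof. rewrite /pA -mul2n; snia. Qed.

Lemma cover y : y < 2 * h + ng + e -> exists2 j, j < k & exists t, F j t = y.
Proof.
move=> Hy.
have Hk0 : 0 < k by slia.
have := pA_big => Hbig.
case: (ltnP y h) => H1.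
  exists 0 => //; exists (2 * (y + h)).
  have Ht : 2 * (y + h) < pA by move: Hbig H1; clear; slia.
  rewrite F_base.
  - by rewrite /base /= /baseA /bgen odd2 half2 add0n addn0 -modnDmr modnn addn0 modn_small.
  - by rewrite /per /= modn_small // i1_0 => E; move: E Hbig H1; clear; slia.
  - rewrite /per /= modn_small // /i2 /=; case: e => E.
      by move: E Hh; clear; slia.
    by move: E Ht; clear; slia.
case: (ltnP y (2 * h)) => H2.
  exists 0 => //; exists (2 * (y - h)).+1.
  have Ht : (2 * (y - h)).+1 < pA by move: Hbig H2; clear; slia.
  rewrite F_base.
  - rewrite /base /= /baseA /bgen /= odd2 /= uphalf_half odd2 add0n half2.
    rewrite (divn_small (m := y - h)); last by move: H2; clear; slia.
    by rewrite !addn0 modn_small ?subnKC //; move: H2; clear; slia.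
  - by rewrite /per /= modn_small // i1_0 => E; move: E Hbig H2; clear; slia.
  - rewrite /per /= modn_small // /i2 /=; case: e => E.
      by move: E Hh; clear; slia.
    by move: E Ht; clear; slia.
case: (ltnP y (2 * h + ng)) => H3.
  have Hm : y - 2 * h < ng by move: H2 H3; clear; slia.
  have Hmk : 2 * (y - 2 * h) < k.
    move: Hm; rewrite /ng gtn_half_double -mul2n; clear; slia.
  exists (2 * (y - 2 * h)) => //; exists (i1 (2 * (y - 2 * h))).
  rewrite F_i1.
    by rewrite /s1 half2 subnKC.
  by rewrite /per /i1 odd2 modn_mod.
have He : e.
  move: Hy H3; case: e => //; rewrite /= addn0 => A B; exfalso; move: A B; clear; slia.
have Hy' : y = 2 * h + ng by move: Hy H3; rewrite He /=; clear; slia.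
exists 0 => //; exists 0.
rewrite F_i2.
- by rewrite /s2 Hy'.
- by rewrite mod0n i1_0 => E; move: E Hbig Hh; clear; slia.
- by rewrite mod0n /i2 /= He.
Qed.

Lemma late j t : j < k -> F j t = 2 * h + ng.-1 -> k.-2 <= j.
Proof.
move=> Hj E.
have Hng := ng_pos.
have Hm : ng.-1 < ng by rewrite prednK.
have Hk2 : k <= 2 * ng.
  have := half_spec k.+1; rewrite /ng; move: (k.+1./2) (odd k.+1) => x b.
  by case: b => /=; clear; slia.
case: (Fvisit Hj Hm E) => [[-> _]|[-> _]|[-> _]]; move: Hk2 Hng; clear; slia.
Qed.

Lemma pApB : pA != pB.
Proof. by rewrite neq_ltn pB_lt orbT. Qed.


Variable N : nat.
Hypothesis HN : 2 * h + ng + e = N.+1.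

Definition site (x : nat) : 'I_N.+1 := inord x.
Definition Rsys : PVsys 'I_N.+1 'I_k :=
  fun c => (site (F c 0), mkseq (fun i => site (F c i.+1)) (per c).-1).

Lemma period_eq c : period Rsys c = per c.
Proof. by rewrite /period /route /Rsys /= size_mkseq prednK // per_pos. Qed.

Lemma pos_eq c t : pos Rsys c t = site (F c t).
Proof.
rewrite /pos period_eq -(F_mod c t).
have := ltn_pmod t (per_pos c); move: (t %% per c) => i Hi.
rewrite /route /Rsys /=; case: i Hi => [//|i] Hi /=.
by rewrite nth_mkseq // -ltnS prednK // per_pos.
Qed.

Lemma F_ltN j t : j < k -> F j t < N.+1.
Proof. by move=> Hj; rewrite -HN; apply: F_range. Qed.

Lemma site_inj x y : x < N.+1 -> y < N.+1 -> site x = site y -> x = y.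
Proof. by move=> Hx Hy /(congr1 (@nat_of_ord _)); rewrite /site !inordK. Qed.

Lemma pos_inj (c d : 'I_k) t u : pos Rsys c t = pos Rsys d u -> F c t = F d u.
Proof. by rewrite !pos_eq => /site_inj; apply; apply: F_ltN. Qed.

Lemma Rsimple : simple_PV Rsys.
Proof.
move=> c; split.
  move=> i _; apply/eqP => /pos_inj; exact: F_noloop.
move=> i j Hij; rewrite period_eq => Hj /pos_inj E1 /pos_inj E2.
exact: (F_edge (ltn_ord c) Hij Hj E1 E2).
Qed.

Lemma Rhetero : heterogeneous Rsys.
Proof.
have H0 : 0 < k by apply: ltn_trans Hk.
rewrite /heterogeneous /homogeneous; apply/negP => /forallP /(_ (Ordinal H0)) /forallP /(_ (Ordinal Hk)).
by rewrite !period_eq /per /= (negbTE pApB).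
Qed.


Fixpoint downl (j : nat) : seq nat := if j is j'.+1 then j' :: downl j' else [::].

Definition adj (a b : nat) := (a.+1 == b) || (b.+1 == a).

Lemma mem_downl i j : (i \in downl j) = (i < j).
Proof. elim: j => [//|j IH] /=; by rewrite inE IH ltnS [in RHS]leq_eqVlt. Qed.

Lemma path_downl j : path adj j (downl j).
Proof. elim: j => [//|j IH] /=; by rewrite IH /adj eqxx orbT. Qed.

Lemma last_downl j : last j (downl j) = 0.
Proof. elim: j => [//|j IH] /=; exact: IH. Qed.

Lemma path_iota s m : path adj s (iota s.+1 m).
Proof. elim: m s => [//|m IH] s /=; by rewrite IH /adj eqxx. Qed.

Lemma meets_adj (c0 : 'I_k) a b : a < k -> b < k -> adj a b ->
  meets Rsys L (insubd c0 a) (insubd c0 b).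
Proof.
move=> Ha Hb; rewrite /adj => /orP [/eqP E|/eqP E].
  exists (g b); first exact: g_lt.
  move=> t Ht; rewrite !pos_eq !val_insubd Ha Hb -E; congr site.
  by apply: meet_pos; rewrite ?E.
exists (g a); first exact: g_lt.
move=> t Ht; rewrite !pos_eq !val_insubd Ha Hb -E; congr site.
by symmetry; apply: meet_pos; rewrite ?E.
Qed.

Lemma chain_nat (c0 : 'I_k) l : forall j0, j0 < k -> all (fun x => x < k) l -> path adj j0 l ->
  chain_ok Rsys L (insubd c0 j0) (map (insubd c0) l).
Proof.
elim: l => [//|a l IH] j0 Hj0 /= /andP [Ha Hl] /andP [Hadj Hp]; split.
  exact: meets_adj.
exact: IH.
Qed.

Lemma Rfeasible : feasible Rsys.
Proof.
move=> c.
have Hper : forall d, period Rsys d <= L.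
  by move=> d; rewrite period_eq; apply: dvdn_leq L_pos (per_L d).
set l := downl c ++ iota 1 k.-1.
have Hl : all (fun x => x < k) l.
  apply/allP => x; rewrite mem_cat mem_downl mem_iota => /orP [H|/andP [_ H]].
    exact: ltn_trans H (ltn_ord c).
  by move: H; rewrite add1n prednK // (ltn_trans _ Hk).
have Hpath : path adj c l by rewrite cat_path path_downl last_downl path_iota.
have Hch := chain_nat c (ltn_ord c) Hl Hpath.
rewrite valKd in Hch.
have [w [Hv Hc]] := chain_walk Hper 0 Hch.
exists w; rewrite /explores Hv /=; apply/forallP => y.
have Hy : y < 2 * h + ng + e by rewrite HN.
have [j Hj [t Ht]] := cover Hy.
have -> : y = pos Rsys (insubd c j) t.
  have Ec : nat_of_ord (insubd c j) = j by rewrite (val_insubd c j) Hj.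
  apply: val_inj; rewrite pos_eq /site /= inordK; last exact: F_ltN.
  by rewrite Ec Ht.
apply: Hc; rewrite inE; case: (j =P c) => [E|NE].
  by rewrite E valKd eqxx.
apply/orP; right; apply: map_f.
rewrite mem_cat mem_downl mem_iota; case: j Hj NE {Ht} => [|j] Hj NE.
  by rewrite lt0n; apply/orP; left; apply/eqP => E; apply: NE; rewrite E.
have Hk0 : 0 < k by apply: ltn_trans Hk.
by apply/orP; right; rewrite add1n prednK // Hj.
Qed.


Lemma Rlower (st : strategy 'I_N.+1 'I_k) : solves Rsys st -> (k - 3) * L <= max_moves Rsys st.
Proof.
move=> Hs.
have H0 : 0 < k by apply: ltn_trans Hk.
set c0 := Ordinal H0.
set x0 := pos Rsys c0 0.
have Hx0 : is_start Rsys x0 by apply/existsP; exists c0.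
have /andP [Hv Hall] := Hs x0 Hx0.
have Hng := ng_pos.
set ys := site (2 * h + ng.-1).
have Hys : ys \in walk_sites Rsys x0 0 (st x0) by move/forallP: Hall; apply.
pose P := fun (x : 'I_N.+1) (t : nat) => exists c : 'I_k, x = pos Rsys c t /\ T c <= t.
have Hstep : forall x t c, P x t -> pos Rsys c t = x -> P (pos Rsys c t.+1) t.+1.
  move=> x t c [d [-> Hd]] E; exists c; split => //.
  have E' := pos_inj E.
  case: (ltngtP c d) => H.
  - have [E1 _] := meet_nat H (ltn_ord d) E'.
    by apply: leq_trans (T_mono c) _; rewrite -E1; apply: leqW.
  - have [E1 E2] := meet_nat H (ltn_ord c) (esym E').
    apply: leqW; apply: T_step => //; first by rewrite E1.
    by rewrite E1.
  - have -> : c = d by apply: val_inj; exact: H.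
    exact: leqW.
have HP0 : P x0 0 by exists c0.
have [t' [_ Ht' [c [Ec Tc]]]] := walk_invariant Hstep Hv HP0 Hys.
have Fc : F c t' = 2 * h + ng.-1.
  move: Ec; rewrite pos_eq => /site_inj -> //; last exact: F_ltN.
  by rewrite -HN -addnA ltn_add2l; case: (ng) Hng => //= n _; rewrite ltnS leq_addr.
have Hlate := late (ltn_ord c) Fc.
rewrite /max_moves; apply: (leq_trans _ (leq_bigmax_cond _ Hx0)).
rewrite add0n in Ht'.
apply: (leq_trans _ Ht'); apply: (leq_trans _ Tc); apply: (leq_trans _ (T_lower c)).
by rewrite leq_mul2r; apply/orP; right; move: Hlate; clear; slia.
Qed.


Lemma Rall : exists R : PVsys 'I_N.+1 'I_k,
  simple_PV R /\ heterogeneous R /\ feasible R /\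
  forall st : strategy 'I_N.+1 'I_k, solves R st -> (k - 3) * L <= max_moves R st.
Proof.
exists Rsys; split; first exact: Rsimple.
split; first exact: Rhetero.
split; first exact: Rfeasible.
exact: Rlower.
Qed.

End Construction.

Lemma gcd_pApB h : 0 < h -> gcdn (pA h) (pB h) = 2.
Proof.
move=> Hh; rewrite /pA /pB /hp -!mul2n -muln_gcdr.
have : coprime (h * h) (h.-1 * h.-1).
  by rewrite !mulnn coprimeXl // coprimeXr // coprimenP.
by move/eqP => ->.
Qed.

Lemma L_val h : 0 < h -> L h = 2 * (h * h) * (h.-1 * h.-1).
Proof.
move=> Hh; have := muln_lcm_gcd (pA h) (pB h); rewrite gcd_pApB // /pA /pB /hp -!mul2n.
rewrite /L /pA /pB /hp -!mul2n.
move: (lcmn (2 * (h * h)) (2 * (h.-1 * h.-1))) (h * h) (h.-1 * h.-1) => l x y; snia.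
Qed.

Lemma arith (n k h x e : nat) : 36 <= n -> 6 * (k + 2) <= n -> 2 * x <= k + 1 -> e <= 1 -> n = 2 * h + x + e ->
  n * n - 2 * n <= 5 * (h * (h - 1)).
Proof.
move=> /leP H1 /leP H2 /leP H3 /leP H4 H5; apply/leP.
have H6 : (24 * h + 6 >= 11 * n)%coq_nat by unfold addn, muln in *; lia.
unfold addn, muln, subn in *. nia.
Qed.

Theorem mainTheorem6 (n k : nat) :
  36 <= n -> 4 <= k -> 6 * (k + 2) <= n ->
  exists R : PVsys 'I_n 'I_k,
    simple_PV R /\ heterogeneous R /\ feasible R /\
    forall st : strategy 'I_n 'I_k, solves R st ->
      (k - 3) * (n ^ 2 - 2 * n) ^ 2 <= 16 * max_moves R st.
Proof.
move=> Hn Hk Hnk.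
have Hx : 2 * ng k <= k + 1.
  by have := half_spec k.+1; rewrite /ng; move: (k.+1./2) (odd k.+1) => x b; case: b => /=; clear; slia.
set x := ng k in Hx.
have Hxn : x <= n by move: Hx Hnk; clear; slia.
set h := (n - x)./2.
set e := odd (n - x).
have Hdec : n = 2 * h + x + e.
  have := half_spec (n - x); rewrite -/h -/e => E.
  by move: E Hxn; move: (nat_of_bool e) => b; clear; slia.
have He1 : e <= 1 by case: (e).
have Har := arith Hn Hnk Hx He1 Hdec.
have H24 : 11 * n <= 24 * h + 6 by move: Hdec He1 Hx Hnk; move: (nat_of_bool e) => b; clear; slia.
have H1 : 2 < h by move: H24 Hn; clear; slia.
have H2 : 1 < k by move: Hk; clear; slia.
have H3 : k <= h.-1.*2 by rewrite -mul2n; move: H24 Hnk; clear; slia.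
have H4 : k.+1 * pB h < L h.
  rewrite L_val ?(ltn_trans _ H1) // /pB /hp -mul2n.
  have Hkh : k.+1 < h * h by move: H24 Hnk H1; clear; snia.
  have HB : 0 < h.-1 * h.-1 by rewrite muln_gt0 andbb; move: H1; clear; slia.
  by move: Hkh HB; move: (h * h) (h.-1 * h.-1) => a b; clear; snia.
clearbody h e.
case: n Hn Hnk Hxn Hdec Har H24 => [//|N] Hn Hnk Hxn Hdec Har H24.
have HN : 2 * h + ng k + e = N.+1 by rewrite Hdec.
have [R [Rs [Rh [Rf Rl]]]] := Rall H1 H2 H3 H4 HN.
exists R; split => //; split => //; split => // st Hst.
have Hl := Rl st Hst.
have HD : (N.+1 ^ 2 - 2 * N.+1) ^ 2 <= 16 * L h.
  rewrite L_val ?(ltn_trans _ H1) //.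
  have Hhh : h * (h - 1) = h * h.-1 by rewrite subn1.
  rewrite Hhh in Har.
  have -> : 2 * (h * h) * (h.-1 * h.-1) = 2 * ((h * h.-1) * (h * h.-1)).
    by rewrite -!mulnA; congr (_ * _); rewrite mulnCA; congr (_ * _); rewrite mulnCA.
  rewrite !expnS expn0 !muln1.
  move: Har; move: (N.+1 * N.+1 - 2 * N.+1) (h * h.-1) => d y; clear; snia.
apply: (leq_trans (leq_mul (leqnn (k - 3)) HD)).
by rewrite mulnCA leq_mul2l Hl orbT.
Qed.
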